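(* Let $f(z)=\sum_{j\ge 1} b_j z^j$ be analytic in $\mathbb{D}$ with $\|f\|_{\mathcal{B}}\le 1$ and $b_j\ge 0$ for all $j\ge 1$. Then for every integer $n\ge 2$, $$ \mathcal{F}_n(f)=\sum_{k=1}^n k|b_k|^2\le n B_n^2, $$ and equality holds only for $f(z)=B_n z^n$.
   Context: $\mathbb{D}$ is the open unit disc. The Bloch space $\mathcal{B}$ consists of analytic functions $f$ on $\mathbb{D}$ with finite norm $\|f\|_{\mathcal{B}}=|f(0)|+\sup_{z\in\mathbb{D}}(1-|z|^2)|f'(z)|$. For $n\ge 2$, $B_n=\frac{n+1}{2n}\left(\frac{n+1}{n-1}\right)^{(n-1)/2}$ (this is the sharp bound for $|b_n|$ over functions $f=\sum_{k\ge1}b_kz^k$ with $\|f\|_{\mathcal{B}}\le 1$), and $B_1=1$. *)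

(* Defs.v *)
From Stdlib Require Import Reals.
From Coquelicot Require Import Coquelicot.
Open Scope R_scope.

Definition in_disc (z : C) : Prop := Cmod z < 1.

Definition has_taylor_coeffs (b : nat -> R) (f : C -> C) : Prop :=
  forall z : C, in_disc z -> is_pseries (fun j => RtoC (b j)) z (f z).

(* Derivative of f(z)=sum_j b_j z^j on the disc: the (termwise) derivative
   series sum_j (j+1) b_(j+1) z^j (Coquelicot's [PS_derive]). *)
Definition is_deriv_value (b : nat -> R) (z l : C) : Prop :=
  is_pseries (fun j => RtoC (PS_derive b j)) z l.

(* ||f||_B <= 1, i.e. |f(0)| + sup_{z in D} (1-|z|^2)|f'(z)| <= 1,
   written pointwise (equivalent to the bound on the supremum). *)
Definition bloch_norm_le1 (b : nat -> R) (f : C -> C) : Prop :=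
  forall z l : C, in_disc z -> is_deriv_value b z l ->
    Cmod (f (RtoC 0)) + (1 - Cmod z ^ 2) * Cmod l <= 1.

Definition Bconst (n : nat) : R :=
  match n with
  | 1%nat => 1
  | _ => (INR n + 1) / (2 * INR n) *
         Rpower ((INR n + 1) / (INR n - 1)) ((INR n - 1) / 2)
  end.

Definition calF (b : nat -> R) (n : nat) : R :=
  sum_f 1 n (fun k => INR k * Rabs (b k) ^ 2).

Fixpoint Cpown (z : C) (n : nat) : C :=
  match n with
  | O => RtoC 1
  | S m => Cmult z (Cpown z m)
  end.

(* Main.v *)
Require Import Defs.
From Stdlib Require Import Reals Lra Lia.
From Coquelicot Require Import Coquelicot.
Open Scope R_scope.

Definition chi (t : R) := ln (1 + t) - ln (1 - t) - 2 * t.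

Lemma chi_ge0 : forall t, 0 <= t < 1 -> 0 <= chi t.
Proof.
  intros t Ht.
  destruct (Req_dec t 0) as [->|Hn].
  { unfold chi. replace (1+0) with 1 by ring. replace (1-0) with 1 by ring. rewrite ln_1. lra. }
  assert (D : forall x, Rmin 0 t < x < Rmax 0 t -> is_derive chi x (2 * x ^ 2 / (1 - x ^ 2))).
  { intros x Hx. rewrite Rmin_left in Hx by lra. rewrite Rmax_right in Hx by lra.
    unfold chi. auto_derive. repeat split; lra. field; repeat split; nra. }
  assert (Cn : forall x, Rmin 0 t <= x <= Rmax 0 t -> continuity_pt chi x).
  { intros x Hx. rewrite Rmin_left in Hx by lra. rewrite Rmax_right in Hx by lra.
    apply continuity_pt_filterlim. apply (@ex_derive_continuous R_AbsRing R_NormedModule).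
    unfold chi. auto_derive. lra. }
  destruct (MVT_gen chi 0 t _ D Cn) as [c [Hc E]].
  rewrite Rmin_left in Hc by lra. rewrite Rmax_right in Hc by lra.
  assert (chi 0 = 0).
  { unfold chi. replace (1+0) with 1 by ring. replace (1-0) with 1 by ring. rewrite ln_1. lra. }
  assert (0 <= 2 * c ^ 2 / (1 - c ^ 2)).
  { apply Rmult_le_pos. nra. apply Rlt_le, Rinv_0_lt_compat. nra. }
  nra.
Qed.

Definition Lf (x : R) := ln (x + 1) - ln (2 * x) + (x - 1) / 2 * (ln (x + 1) - ln (x - 1)).

Lemma Lf_mono : forall x y, 1 < x -> x <= y -> Lf x <= Lf y.
Proof.
  intros x y Hx Hxy.
  destruct (Req_dec x y) as [<-|Hn]; [lra|].
  assert (D : forall z, Rmin x y < z < Rmax x y -> is_derive Lf z ((ln (z+1) - ln (z-1))/2 - / z)).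
  { intros z Hz. rewrite Rmin_left in Hz by lra. rewrite Rmax_right in Hz by lra.
    unfold Lf. auto_derive. repeat split; lra. replace (z + - (1)) with (z - 1) by ring. field. repeat split; lra. }
  assert (Cn : forall z, Rmin x y <= z <= Rmax x y -> continuity_pt Lf z).
  { intros z Hz. rewrite Rmin_left in Hz by lra. rewrite Rmax_right in Hz by lra.
    apply continuity_pt_filterlim. apply (@ex_derive_continuous R_AbsRing R_NormedModule).
    unfold Lf. auto_derive. repeat split; lra. }
  destruct (MVT_gen Lf x y _ D Cn) as [c [Hc E]].
  rewrite Rmin_left in Hc by lra. rewrite Rmax_right in Hc by lra.
  assert (Hch := chi_ge0 (/ c)).
  assert (0 < / c < 1).
  { split. apply Rinv_0_lt_compat; lra. rewrite <- Rinv_1. apply Rinv_lt_contravar; lra. }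
  assert (Heq : chi (/ c) = ln (c + 1) - ln (c - 1) - 2 / c).
  { unfold chi. rewrite <- (ln_div (c+1)) by lra.
    rewrite <- ln_div by lra.
    replace ((1 + / c) / (1 - / c)) with ((c + 1) / (c - 1)). unfold Rdiv. ring.
    field. split; lra. }
  assert (0 <= (ln (c+1) - ln (c-1))/2 - / c) by (rewrite Heq in Hch; lra).
  nra.
Qed.


Lemma Bconst_eq : forall k, (2 <= k)%nat ->
  Bconst k = (INR k + 1) / (2 * INR k) *
         Rpower ((INR k + 1) / (INR k - 1)) ((INR k - 1) / 2).
Proof. intros [|[|k]] Hk; [lia|lia|reflexivity]. Qed.

Lemma INR_ge2 : forall k, (2 <= k)%nat -> 2 <= INR k.
Proof. intros k Hk. apply le_INR in Hk. simpl in Hk. lra. Qed.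

Lemma Bconst_exp : forall k, (2 <= k)%nat -> Bconst k = exp (Lf (INR k)).
Proof.
  intros k Hk. rewrite Bconst_eq by auto. pose proof (INR_ge2 k Hk).
  unfold Lf, Rpower. rewrite exp_plus.
  rewrite <- ln_div by lra. rewrite exp_ln.
  2:{ apply Rdiv_lt_0_compat; lra. }
  f_equal. f_equal. rewrite ln_div by lra. ring.
Qed.

Lemma Bconst_mono : forall k n, (2 <= k)%nat -> (k <= n)%nat -> Bconst k <= Bconst n.
Proof.
  intros k n Hk Hkn. rewrite !Bconst_exp by lia.
  assert (HH : forall a b, a <= b -> exp a <= exp b).
  { intros a b Hab. destruct (Rle_lt_or_eq_dec _ _ Hab) as [h| ->]. apply Rlt_le, exp_increasing, h. lra. }
  apply HH. apply Lf_mono. pose proof (INR_ge2 k Hk); lra. apply le_INR; auto.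
Qed.

Lemma Bconst_ge1 : forall n, (2 <= n)%nat -> 1 <= Bconst n.
Proof.
  intros n Hn. apply Rle_trans with (Bconst 2); [|apply Bconst_mono; lia].
  rewrite Bconst_eq by lia. simpl INR.
  replace ((1 + 1 + 1) / (1 + 1 - 1)) with 3 by field.
  replace ((1 + 1 - 1) / 2) with (/ 2) by field.
  rewrite Rpower_sqrt by lra.
  assert (4/3 <= sqrt 3).
  { rewrite <- (sqrt_square (4/3)) by lra. apply sqrt_le_1_alt. lra. }
  replace ((1 + 1 + 1) / (2 * (1 + 1))) with (3/4) by field. lra.
Qed.

Definition rho (k : nat) := (INR k - 1) / (INR k + 1).
Definition Pk (k : nat) := Rpower (rho k) ((INR k - 1) / 2).

Lemma rho_pos : forall k, (2 <= k)%nat -> 0 < rho k < 1.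
Proof. intros k Hk. pose proof (INR_ge2 k Hk). unfold rho. split.
  apply Rdiv_lt_0_compat; lra. replace ((INR k - 1) / (INR k + 1)) with (1 - 2 / (INR k + 1)) by (field; lra).
  assert (0 < 2 / (INR k + 1)) by (apply Rdiv_lt_0_compat; lra). lra. Qed.

Lemma Pk_pos : forall k, 0 < Pk k.
Proof. intros k. unfold Pk, Rpower. apply exp_pos. Qed.

Lemma Bconst_Pk : forall k, (2 <= k)%nat ->
  Bconst k * (2 * INR k / (INR k + 1)) * Pk k = 1.
Proof.
  intros k Hk. pose proof (INR_ge2 k Hk). pose proof (rho_pos k Hk).
  rewrite Bconst_eq by auto. unfold Pk.
  replace ((INR k + 1) / (INR k - 1)) with (/ rho k).
  2:{ unfold rho. field. split; lra. }
  unfold Rpower. rewrite ln_Rinv by lra.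
  replace (exp ((INR k - 1) / 2 * - ln (rho k))) with (/ exp ((INR k - 1) / 2 * ln (rho k))).
  2:{ rewrite <- exp_Ropp. f_equal. ring. }
  pose proof (exp_pos ((INR k - 1) / 2 * ln (rho k))). field. repeat split; lra.
Qed.

Definition rk (k : nat) := sqrt (rho k).

Lemma rk_prop : forall k, (2 <= k)%nat ->
  0 < rk k < 1 /\ rk k ^ 2 = rho k /\ rk k ^ (k - 1) = Pk k.
Proof.
  intros k Hk. pose proof (INR_ge2 k Hk). pose proof (rho_pos k Hk).
  assert (E2 : rk k ^ 2 = rho k). { unfold rk. simpl. rewrite Rmult_1_r, sqrt_sqrt; lra. }
  assert (0 < rk k). { unfold rk. apply sqrt_lt_R0. lra. }
  split; [split; [auto|] | split; [auto|]].
  - nra.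
  - unfold rk. rewrite <- Rpower_sqrt by lra. rewrite <- Rpower_pow.
    2:{ unfold Rpower. apply exp_pos. }
    rewrite Rpower_mult. unfold Pk. f_equal. rewrite minus_INR by lia. simpl. field.
Qed.


Lemma powC : forall r k, pow_n (K := C_AbsRing) (RtoC r) k = RtoC (r ^ k).
Proof. intros r k. induction k as [|k IH]. reflexivity.
  simpl pow_n. rewrite IH. simpl. rewrite RtoC_mult. reflexivity. Qed.

Lemma sumC : forall (c : nat -> R) r N,
  sum_n (G := C_AbelianMonoid) (fun k => scal (V := C_NormedModule) (pow_n (K := C_AbsRing) (RtoC r) k) (RtoC (c k))) N
  = RtoC (sum_n (fun k => c k * r ^ k) N).
Proof.
  intros c r N. induction N as [|N IH].
  - rewrite !sum_O. rewrite powC. change (scal (RtoC (r^0)) (RtoC (c 0%nat))) with (Cmult (RtoC (r^0)) (RtoC (c 0%nat))).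
    rewrite <- RtoC_mult. f_equal. change (@scal R_Ring R_ModuleSpace) with Rmult. simpl. ring.
  - rewrite !sum_Sn. rewrite IH, powC.
    change (scal (RtoC (r^(S N))) (RtoC (c (S N)))) with (Cmult (RtoC (r^(S N))) (RtoC (c (S N)))).
    rewrite <- RtoC_mult. change (@plus C_AbelianMonoid) with Cplus. rewrite <- RtoC_plus.
    f_equal. change (@plus R_AbelianMonoid) with Rplus. ring.
Qed.

Lemma lim_fst : forall (u : nat -> C) (l : C),
  filterlim u eventually (locally l) -> is_lim_seq (fun n => fst (u n)) (fst l).
Proof.
  intros u l H. apply is_lim_seq_spec. intros eps.
  apply filterlim_locally with (eps := eps) in H.
  destruct H as [N HN]. exists N. intros n Hn. specialize (HN n Hn).
  destruct HN as [H1 H2]. exact H1.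
Qed.

Lemma lim_RtoC : forall (u : nat -> R) (l : R),
  is_lim_seq u l -> filterlim (fun n => RtoC (u n)) eventually (locally (RtoC l)).
Proof.
  intros u l H. apply is_lim_seq_spec in H. apply filterlim_locally. intros eps.
  destruct (H eps) as [N HN]. exists N. intros n Hn. split.
  - exact (HN n Hn).
  - simpl. change (ball 0 eps 0). apply ball_center.
Qed.

Lemma psum_le_lim : forall (a : nat -> R) (l : R), (forall k, 0 <= a k) ->
  is_lim_seq (sum_n a) l -> forall N, sum_n a N <= l.
Proof.
  intros a l Ha H N. apply (is_lim_seq_incr_compare (sum_n a) l H).
  intros n. rewrite sum_Sn. change (@plus R_AbelianMonoid) with Rplus. specialize (Ha (S n)). lra.
Qed.

Lemma sum_n_nonneg : forall (a : nat -> R) N, (forall k, 0 <= a k) -> 0 <= sum_n a N.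
Proof. intros a N Ha. induction N. rewrite sum_O. auto. rewrite sum_Sn.
  change (@plus R_AbelianMonoid) with Rplus. specialize (Ha (S N)). lra. Qed.

Lemma key : forall b f, (forall j, 0 <= b j) -> has_taylor_coeffs b f -> bloch_norm_le1 b f ->
  forall r, 0 <= r < 1 -> forall N, (1 - r ^ 2) * sum_n (fun k => PS_derive b k * r ^ k) N <= 1.
Proof.
  intros b f Hb Ht Hbl r Hr N.
  set (s := (1 + r) / 2).
  assert (Hs : in_disc (RtoC s)).
  { unfold in_disc. rewrite Cmod_R. unfold s. rewrite Rabs_right; lra. }
  specialize (Ht _ Hs). unfold is_pseries, is_series in Ht.
  apply lim_fst in Ht.
  assert (Hl : is_lim_seq (sum_n (fun k => b k * s ^ k)) (fst (f (RtoC s)))).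
  { eapply is_lim_seq_ext; [|exact Ht]. intros n. exact (f_equal fst (sumC b s n)). }
  assert (Hbd : forall k, Rabs (b k * s ^ k) <= fst (f (RtoC s))).
  { intros k. assert (0 <= s) by (unfold s; lra).
    assert (0 <= b k * s ^ k) by (apply Rmult_le_pos; [auto| apply pow_le; lra]).
    rewrite Rabs_right by lra.
    apply Rle_trans with (sum_n (fun k => b k * s ^ k) k).
    - destruct k. rewrite sum_O. lra. rewrite sum_Sn. change (@plus R_AbelianMonoid) with Rplus.
      assert (0 <= sum_n (fun k0 : nat => b k0 * s ^ k0) k).
      { apply sum_n_nonneg. intros k0. apply Rmult_le_pos; [auto| apply pow_le; lra]. }
      lra.
    - apply psum_le_lim; auto. intros. apply Rmult_le_pos; [auto| apply pow_le; lra]. }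
  assert (Hcv : Rbar_lt (Rabs r) (CV_radius b)).
  { destruct (CV_radius_bounded b) as [Hub _].
    assert (Hle : Rbar_le s (CV_radius b)).
    { apply Hub. exists (fst (f (RtoC s))). exact Hbd. }
    rewrite Rabs_right by lra.
    destruct (CV_radius b) as [c| |]; simpl in *; auto; unfold s in Hle; lra. }
  pose proof (is_pseries_derive b r Hcv) as Hd.
  set (D := Derive (PSeries b) r) in *.
  apply is_pseries_R in Hd.
  assert (HdC : is_deriv_value b (RtoC r) (RtoC D)).
  { unfold is_deriv_value, is_pseries, is_series.
    eapply filterlim_ext; [intro n; symmetry; apply sumC|].
    apply lim_RtoC. eapply is_lim_seq_ext; [|exact Hd]. intros n. reflexivity. }
  assert (Hin : in_disc (RtoC r)).
  { unfold in_disc. rewrite Cmod_R. rewrite Rabs_right; lra. }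
  specialize (Hbl _ _ Hin HdC). rewrite !Cmod_R in Hbl.
  assert (0 <= Cmod (f (RtoC 0))) by apply Cmod_ge_0.
  rewrite Rabs_right in Hbl by lra.
  assert (HN : sum_n (fun k => PS_derive b k * r ^ k) N <= D).
  { apply psum_le_lim.
    - intros k. unfold PS_derive. apply Rmult_le_pos; [apply Rmult_le_pos; [apply pos_INR|auto]| apply pow_le; lra].
    - eapply is_lim_seq_ext; [|exact Hd]. intros n. reflexivity. }
  assert (0 <= 1 - r^2) by nra.
  assert (Rabs D >= D) by (apply Rle_ge, Rle_abs).
  nra.
Qed.


Lemma term_le_sum : forall (a : nat -> R) N j, (forall k, 0 <= a k) -> (j <= N)%nat ->
  a j <= sum_f_R0 a N.
Proof.
  intros a N j Ha Hj. induction N as [|N IH].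
  - assert (j = 0%nat) by lia. subst. simpl. lra.
  - destruct (Nat.eq_dec j (S N)) as [->|Hne].
    + rewrite tech5. pose proof (cond_pos_sum a N Ha). lra.
    + rewrite tech5. specialize (IH ltac:(lia)). specialize (Ha (S N)). lra.
Qed.

Lemma two_le_sum : forall (a : nat -> R) N i j, (forall k, 0 <= a k) -> (i < j)%nat -> (j <= N)%nat ->
  a i + a j <= sum_f_R0 a N.
Proof.
  intros a N i j Ha Hij HjN. induction N as [|N IH]. lia.
  destruct (Nat.eq_dec j (S N)) as [->|Hne].
  + rewrite tech5. pose proof (term_le_sum a N i Ha ltac:(lia)). lra.
  + rewrite tech5. specialize (IH ltac:(lia)). specialize (Ha (S N)). lra.
Qed.

Section Fin.
Variable c : nat -> R.
Hypothesis Hc : forall k, 0 <= c k.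
Hypothesis H : forall r, 0 <= r < 1 -> forall N,
  (1 - r ^ 2) * sum_f_R0 (fun k => INR (S k) * c k * r ^ k) N <= 1.

Lemma term_nonneg : forall r, 0 <= r -> forall k, 0 <= INR (S k) * c k * r ^ k.
Proof. intros r Hr k. apply Rmult_le_pos. apply Rmult_le_pos. apply pos_INR. auto. apply pow_le; auto. Qed.

Lemma single : forall r, 0 <= r < 1 -> forall j, (1 - r ^ 2) * (INR (S j) * c j * r ^ j) <= 1.
Proof.
  intros r Hr j. eapply Rle_trans; [|apply (H r Hr j)].
  apply Rmult_le_compat_l. nra. apply (term_le_sum (fun k => INR (S k) * c k * r ^ k)). apply term_nonneg; lra. lia.
Qed.

Lemma c_le_B : forall m j, (1 <= m)%nat -> (j <= m)%nat -> c j <= Bconst (S m).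
Proof.
  intros m j Hm Hj. destruct j as [|j].
  - pose proof (single 0 ltac:(lra) 0). simpl in H0.
    pose proof (Bconst_ge1 (S m) ltac:(lia)). lra.
  - apply Rle_trans with (Bconst (S (S j))); [|apply Bconst_mono; lia].
    destruct (rk_prop (S (S j)) ltac:(lia)) as [Hr [Hr2 HrP]].
    pose proof (single (rk (S (S j))) ltac:(lra) (S j)) as Hs.
    rewrite Hr2 in Hs. replace (S (S j) - 1)%nat with (S j) in HrP by lia. rewrite HrP in Hs.
    pose proof (Bconst_Pk (S (S j)) ltac:(lia)) as HB.
    pose proof (INR_ge2 (S (S j)) ltac:(lia)) as Hk.
    assert (E : 1 - rho (S (S j)) = 2 / (INR (S (S j)) + 1)) by (unfold rho; field; lra).
    rewrite E in Hs.
    assert (Hpos : 0 < 2 * INR (S (S j)) / (INR (S (S j)) + 1) * Pk (S (S j))).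
    { apply Rmult_lt_0_compat. apply Rdiv_lt_0_compat; lra. apply Pk_pos. }
    apply Rmult_le_reg_r with (2 * INR (S (S j)) / (INR (S (S j)) + 1) * Pk (S (S j))). auto.
    rewrite <- (Rmult_assoc (Bconst (S (S j)))), HB.
    replace (c (S j) * (2 * INR (S (S j)) / (INR (S (S j)) + 1) * Pk (S (S j))))
      with (2 / (INR (S (S j)) + 1) * (INR (S (S j)) * c (S j) * Pk (S (S j)))) by (field; lra).
    exact Hs.
Qed.


Lemma pow_mono : forall r j m, 0 < r < 1 -> (j <= m)%nat -> r ^ m <= r ^ j.
Proof.
  intros r j m Hr Hjm. replace m with (j + (m - j))%nat by lia. rewrite pow_add.
  destruct (Nat.eq_dec (m - j) 0) as [E|Hn]. rewrite E. simpl; lra.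
  pose proof (pow_lt_1_compat r (m - j) ltac:(lra) ltac:(lia)).
  assert (0 < r ^ j) by (apply pow_lt; lra). nra.
Qed.

Lemma pow_smono : forall r j m, 0 < r < 1 -> (j < m)%nat -> r ^ m < r ^ j.
Proof.
  intros r j m Hr Hjm. replace m with (j + (m - j))%nat by lia. rewrite pow_add.
  pose proof (pow_lt_1_compat r (m - j) ltac:(lra) ltac:(lia)).
  assert (0 < r ^ j) by (apply pow_lt; lra). nra.
Qed.

Definition Tsum m := sum_f_R0 (fun j => INR (S j) * c j) m.

Lemma rn_facts : forall m, (1 <= m)%nat ->
  0 < rk (S m) < 1 /\ (1 - rk (S m) ^ 2) * rk (S m) ^ m * (INR (S m) * Bconst (S m)) = 1.
Proof.
  intros m Hm. destruct (rk_prop (S m) ltac:(lia)) as [Hr [Hr2 HrP]].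
  split; auto. rewrite Hr2. replace (S m - 1)%nat with m in HrP by lia. rewrite HrP.
  pose proof (Bconst_Pk (S m) ltac:(lia)) as HB. pose proof (INR_ge2 (S m) ltac:(lia)).
  unfold rho. rewrite <- HB at 4. field. lra.
Qed.

Lemma U_ge : forall m r, 0 < r < 1 ->
  r ^ m * Tsum m <= sum_f_R0 (fun k => INR (S k) * c k * r ^ k) m.
Proof.
  intros m r Hr. unfold Tsum. rewrite scal_sum. apply sum_Rle. intros j Hj.
  pose proof (pow_mono r j m Hr Hj). assert (0 <= INR (S j) * c j) by (apply Rmult_le_pos; [apply pos_INR|auto]).
  apply Rmult_le_compat_l; auto.
Qed.

Lemma T_le : forall m, (1 <= m)%nat -> Tsum m <= INR (S m) * Bconst (S m).
Proof.
  intros m Hm. destruct (rn_facts m Hm) as [Hr E].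
  set (r := rk (S m)) in *.
  pose proof (U_ge m r Hr). pose proof (H r ltac:(lra) m).
  assert (0 < 1 - r ^ 2) by nra. assert (0 < r ^ m) by (apply pow_lt; lra).
  assert (0 < (1 - r ^ 2) * r ^ m) by (apply Rmult_lt_0_compat; auto).
  apply Rmult_le_reg_l with ((1 - r ^ 2) * r ^ m). auto.
  rewrite E. nra.
Qed.

Lemma S2_le : forall m, (1 <= m)%nat ->
  sum_f_R0 (fun j => INR (S j) * c j ^ 2) m <= Bconst (S m) * Tsum m.
Proof.
  intros m Hm. unfold Tsum. rewrite scal_sum. apply sum_Rle. intros j Hj.
  pose proof (c_le_B m j Hm Hj). pose proof (Hc j). pose proof (pos_INR (S j)). assert (c j * c j <= c j * Bconst (S m)) by (apply Rmult_le_compat_l; auto). replace (INR (S j) * c j ^ 2) with (INR (S j) * (c j * c j)) by ring. replace (INR (S j) * c j * Bconst (S m)) with (INR (S j) * (c j * Bconst (S m))) by ring. apply Rmult_le_compat_l; auto.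
Qed.

Lemma main_le : forall m, (1 <= m)%nat ->
  sum_f_R0 (fun j => INR (S j) * c j ^ 2) m <= INR (S m) * Bconst (S m) ^ 2.
Proof.
  intros m Hm. pose proof (S2_le m Hm). pose proof (T_le m Hm).
  pose proof (Bconst_ge1 (S m) ltac:(lia)). nra.
Qed.

Lemma eq_case : forall m, (1 <= m)%nat ->
  sum_f_R0 (fun j => INR (S j) * c j ^ 2) m = INR (S m) * Bconst (S m) ^ 2 ->
  (forall j, (j < m)%nat -> c j = 0) /\ c m = Bconst (S m) /\ (forall j, (m < j)%nat -> c j = 0).
Proof.
  intros m Hm Heq. pose proof (S2_le m Hm). pose proof (T_le m Hm).
  pose proof (Bconst_ge1 (S m) ltac:(lia)).
  assert (HT : Tsum m = INR (S m) * Bconst (S m)) by nra.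
  destruct (rn_facts m Hm) as [Hr E]. set (r := rk (S m)) in *.
  assert (0 < 1 - r ^ 2) by nra. assert (0 < r ^ m) by (apply pow_lt; lra).
  pose proof (H r ltac:(lra) m) as HU.
  set (d := fun j => INR (S j) * c j * (r ^ j - r ^ m)).
  assert (Hd : forall j, (j <= m)%nat -> 0 <= d j).
  { intros j Hj. unfold d. apply Rmult_le_pos. apply Rmult_le_pos. apply pos_INR. auto.
    pose proof (pow_mono r j m Hr Hj). lra. }
  assert (Hsd : sum_f_R0 d m = sum_f_R0 (fun k => INR (S k) * c k * r ^ k) m - r ^ m * Tsum m).
  { unfold d, Tsum. rewrite scal_sum. rewrite <- minus_sum. apply sum_eq. intros; ring. }
  assert (Hsd0 : sum_f_R0 d m <= 0).
  { rewrite Hsd. rewrite HT. nra. }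
  assert (Hlow : forall j, (j < m)%nat -> c j = 0).
  { intros j Hj. set (d' := fun j => if Compare_dec.le_lt_dec j m then d j else 0).
    assert (Hd' : forall k, 0 <= d' k). { intros k. unfold d'. destruct (Compare_dec.le_lt_dec k m); [apply Hd; auto| lra]. }
    pose proof (term_le_sum d' m j Hd' ltac:(lia)) as Ht.
    assert (Hs5 : sum_f_R0 d' m = sum_f_R0 d m).
    { apply sum_eq. intros i Hi. unfold d'. destruct (Compare_dec.le_lt_dec i m); [auto|lia]. }
    rewrite Hs5 in Ht.
    assert (Hdj : d' j = d j). { unfold d'. destruct (Compare_dec.le_lt_dec j m); [auto|lia]. }
    rewrite Hdj in Ht.
    assert (H5 : d j = 0) by (pose proof (Hd j ltac:(lia)); lra).
    unfold d in H5. pose proof (pow_smono r j m Hr Hj). pose proof (Hc j).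
    assert (0 < INR (S j)) by (apply lt_0_INR; lia).
    assert (0 < INR (S j) * (r ^ j - r ^ m)) by (apply Rmult_lt_0_compat; lra).
    nra. }
  assert (Hcm : c m = Bconst (S m)).
  { destruct m as [|m']. lia. unfold Tsum in HT. rewrite tech5 in HT.
    rewrite sum_eq_R0 in HT. 2:{ intros i Hi. rewrite Hlow by lia. ring. }
    assert (0 < INR (S (S m'))) by (apply lt_0_INR; lia). nra. }
  split; [auto|split; [auto|]].
  intros j Hj. pose proof (H r ltac:(lra) j) as Hj2.
  pose proof (two_le_sum (fun k => INR (S k) * c k * r ^ k) j m j (term_nonneg r ltac:(lra)) Hj ltac:(lia)) as Htw.
  cbv beta in Htw. rewrite Hcm in Htw.
  assert (0 < INR (S j)) by (apply lt_0_INR; lia). assert (0 < r ^ j) by (apply pow_lt; lra).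
  pose proof (Hc j).
  assert (Hx : (1 - r ^ 2) * (INR (S m) * Bconst (S m) * r ^ m + INR (S j) * c j * r ^ j) <= 1).
  { eapply Rle_trans; [|exact Hj2]. apply Rmult_le_compat_l; lra. }
  assert ((1 - r ^ 2) * (INR (S j) * c j * r ^ j) <= 0).
  { rewrite Rmult_plus_distr_l in Hx.
    replace ((1 - r ^ 2) * (INR (S m) * Bconst (S m) * r ^ m)) with ((1 - r ^ 2) * r ^ m * (INR (S m) * Bconst (S m))) in Hx by ring.
    rewrite E in Hx. lra. }
  assert (0 < (1 - r ^ 2) * INR (S j) * r ^ j) by (apply Rmult_lt_0_compat; [apply Rmult_lt_0_compat|]; lra).
  nra.
Qed.

End Fin.


Lemma Cpown_pow_n : forall z n, Cpown z n = pow_n (K := C_AbsRing) z n.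
Proof. intros z n. induction n as [|n IH]. reflexivity. simpl. rewrite IH. reflexivity. Qed.

Lemma mono_series : forall (b : nat -> R) (n : nat) (B : R) (z : C),
  (forall k, k <> n -> b k = 0) -> b n = B ->
  forall N, sum_n (G := C_AbelianMonoid) (fun k => scal (V := C_NormedModule) (pow_n (K := C_AbsRing) z k) (RtoC (b k))) N
    = if Nat.leb n N then scal (V := C_NormedModule) (pow_n (K := C_AbsRing) z n) (RtoC B) else zero.
Proof.
  intros b n B z Hz Hn N. induction N as [|N IH].
  - rewrite sum_O. destruct n as [|n].
    + simpl Nat.leb. cbv iota. rewrite Hn. reflexivity.
    + simpl Nat.leb. cbv iota. rewrite Hz by lia. change (RtoC 0) with (@zero C_AbelianMonoid). exact (@scal_zero_r _ (NormedModule.ModuleSpace C_AbsRing C_NormedModule) _).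
  - rewrite sum_Sn, IH.
    destruct (Nat.eq_dec n (S N)) as [->|Hne].
    + rewrite Nat.leb_refl. replace (Nat.leb (S N) N) with false by (symmetry; apply Nat.leb_gt; lia).
      rewrite Hn. apply plus_zero_l.
    + rewrite (Hz (S N)) by auto. change (RtoC 0) with (@zero C_AbelianMonoid).
      rewrite (@scal_zero_r _ (NormedModule.ModuleSpace C_AbsRing C_NormedModule) _). rewrite (@plus_zero_r C_AbelianMonoid).
      destruct (Nat.leb n N) eqn:E1; destruct (Nat.leb n (S N)) eqn:E2; auto.
      * apply Nat.leb_le in E1. apply Nat.leb_gt in E2. lia.
      * apply Nat.leb_gt in E1. apply Nat.leb_le in E2. lia.
Qed.

Lemma mono_f : forall (b : nat -> R) (f : C -> C) (n : nat) (B : R),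
  has_taylor_coeffs b f ->
  (forall k, k <> n -> b k = 0) -> b n = B ->
  forall z, in_disc z -> f z = Cmult (RtoC B) (Cpown z n).
Proof.
  intros b f n B Ht Hz Hn z Hd. specialize (Ht z Hd). unfold is_pseries, is_series in Ht.
  assert (Hl : filterlim (sum_n (G := C_AbelianMonoid) (fun k => scal (V := C_NormedModule) (pow_n (K := C_AbsRing) z k) (RtoC (b k)))) eventually
                 (locally (scal (V := C_NormedModule) (pow_n (K := C_AbsRing) z n) (RtoC B)))).
  { apply filterlim_locally. intros eps. exists n. intros N HN.
    rewrite (mono_series b n B z Hz Hn N). replace (Nat.leb n N) with true by (symmetry; apply Nat.leb_le; lia).
    apply ball_center. }
  pose proof (filterlim_locally_unique _ _ _ Ht Hl) as E.
  rewrite Cpown_pow_n. etransitivity; [exact E|]. change (scal (pow_n z n) (RtoC B)) with (Cmult (pow_n (K := C_AbsRing) z n) (RtoC B)).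
  apply Cmult_comm.
Qed.


Theorem theorem2p2 :
  forall (b : nat -> R) (f : C -> C),
    b 0%nat = 0 ->
    (forall j : nat, (1 <= j)%nat -> 0 <= b j) ->
    has_taylor_coeffs b f ->
    bloch_norm_le1 b f ->
    forall n : nat, (2 <= n)%nat ->
      calF b n <= INR n * Bconst n ^ 2 /\
      (calF b n = INR n * Bconst n ^ 2 ->
       forall z : C, in_disc z -> f z = Cmult (RtoC (Bconst n)) (Cpown z n)).
Proof.
  intros b f Hb0 Hbp Ht Hbl n Hn.
  assert (Hb : forall j, 0 <= b j).
  { intros [|j]. rewrite Hb0; lra. apply Hbp; lia. }
  set (c := fun k => b (S k)).
  assert (Hc : forall k, 0 <= c k) by (intros; apply Hb).
  assert (H : forall r, 0 <= r < 1 -> forall N,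
     (1 - r ^ 2) * sum_f_R0 (fun k => INR (S k) * c k * r ^ k) N <= 1).
  { intros r Hr N. pose proof (key b f Hb Ht Hbl r Hr N) as K.
    rewrite sum_n_Reals in K. unfold PS_derive in K. exact K. }
  destruct n as [|m]; [lia|].
  assert (Hm : (1 <= m)%nat) by lia.
  assert (HF : calF b (S m) = sum_f_R0 (fun j => INR (S j) * c j ^ 2) m).
  { unfold calF, sum_f. replace (S m - 1)%nat with m by lia. apply sum_eq. intros i Hi.
    replace (i + 1)%nat with (S i) by lia. unfold c. rewrite Rabs_right by (apply Rle_ge, Hb). reflexivity. }
  rewrite HF. split.
  - apply (main_le c Hc H m Hm).
  - intros Heq z Hz. destruct (eq_case c Hc H m Hm Heq) as [H1 [H2 H3]].
    apply (mono_f b f (S m) (Bconst (S m)) Ht); auto.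
    intros [|k] Hk. auto.
    assert (k <> m) by lia. destruct (Nat.lt_gt_cases k m) as [[Hl|Hl] _]; auto.
    apply H1; auto. apply H3; auto.
Qed.
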